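(* Let $f:\mathbb{R}^n\to\mathbb{R}$ be continuously differentiable and bounded below with $\nabla f$ Lipschitz continuous on $\mathbb{R}^n$, let $s$ be an integer with $0<s<n$, and let $\{\mathbf{x}^k\}$ be the sequence generated by the partial sparse-simplex method. Then for any $k$ with $\|\mathbf{x}^k\|_0<s$, $$f(\mathbf{x}^k)-f(\mathbf{x}^{k+1})\ge\frac{1}{2L_2(f)}\max_{i=1,\dots,n}(\nabla_i f(\mathbf{x}^k))^2,$$ and for any $k$ with $\|\mathbf{x}^k\|_0=s$, $f(\mathbf{x}^k)-f(\mathbf{x}^{k+1})\ge A(\mathbf{x}^k)$, where $$A(\mathbf{x})=\max\Big\{\frac{1}{2L_2(f)}\max_{i\in I_1(\mathbf{x})}(\nabla_i f(\mathbf{x}))^2,\ M_s(\mathbf{x})\Big[\max_{i\in I_0(\mathbf{x})}|\nabla_i f(\mathbf{x})|-\max_{i\in I_1(\mathbf{x})}|\nabla_i f(\mathbf{x})|-L_2(f)M_s(\mathbf{x})\Big]\Big\}.$$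
   Context: $\|\mathbf{x}\|_0$ is the number of nonzero components, $C_s=\{\mathbf{x}:\|\mathbf{x}\|_0\le s\}$, $I_1(\mathbf{x})=\{i:x_i\neq0\}$, $I_0(\mathbf{x})=\{i:x_i=0\}$, $M_s(\mathbf{x})$ the $s$-th largest absolute value among components of $\mathbf{x}$, $\mathbf{e}_i$ the $i$-th standard basis vector. For $i\neq j$, $\nabla_{i,j}f(\mathbf{x})\in\mathbb{R}^2$ is the vector of the $i$-th and $j$-th partial derivatives, $L_{i,j}(f)$ is a constant with $\|\nabla_{i,j}f(\mathbf{x})-\nabla_{i,j}f(\mathbf{x}+\mathbf{d})\|\le L_{i,j}(f)\|\mathbf{d}\|$ for all $\mathbf{x}$ and all $\mathbf{d}$ with at most two nonzero components, and $L_2(f)=\max_{i\neq j}L_{i,j}(f)$. Partial sparse-simplex method (all one-dimensional minima assumed attained): choose $\mathbf{x}^0\in C_s$. At step $k$: if $\|\mathbf{x}^k\|_0<s$, for each $i$ let $t_i\in\operatorname{argmin}_t f(\mathbf{x}^k+t\mathbf{e}_i)$, $f_i=\min_t f(\mathbf{x}^k+t\mathbf{e}_i)$, $i_k\in\operatorname{argmin}_i f_i$; if $f_{i_k}<f(\mathbf{x}^k)$ set $\mathbf{x}^{k+1}=\mathbf{x}^k+t_{i_k}\mathbf{e}_{i_k}$, else stop. If $\|\mathbf{x}^k\|_0=s$: for $i\in I_1(\mathbf{x}^k)$ let $f_i=\min_t f(\mathbf{x}^k+t\mathbf{e}_i)$; let $i_k^1\in\operatorname{argmin}\{f_i:i\in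 I_1(\mathbf{x}^k)\}$, $i_k^2\in\operatorname{argmax}\{|\nabla_i f(\mathbf{x}^k)|:i\in I_0(\mathbf{x}^k)\}$, $m_k\in\operatorname{argmin}\{|x_i^k|:i\in I_1(\mathbf{x}^k)\}$; let $D_k^1=\min_t f(\mathbf{x}^k+t\mathbf{e}_{i_k^1})$ with minimizer $T_k^1$, and $D_k^2=\min_t f(\mathbf{x}^k-x^k_{m_k}\mathbf{e}_{m_k}+t\mathbf{e}_{i_k^2})$ with minimizer $T_k^2$; if $D_k^1<D_k^2$ set $\mathbf{x}^{k+1}=\mathbf{x}^k+T_k^1\mathbf{e}_{i_k^1}$, else $\mathbf{x}^{k+1}=\mathbf{x}^k-x^k_{m_k}\mathbf{e}_{m_k}+T_k^2\mathbf{e}_{i_k^2}$. *)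

(* Defs.v *)
From HB Require Import structures.
From mathcomp Require Import all_boot all_order all_algebra.
From mathcomp Require Import all_classical all_reals all_analysis.
Set Implicit Arguments. Unset Strict Implicit. Unset Printing Implicit Defensive.
Import Order.TTheory GRing.Theory Num.Theory.
Import numFieldNormedType.Exports.
Local Open Scope ring_scope.

Section PSS.
Variables (R : realType) (n : nat).
Notation vec := 'rV[R]_n.

Definition ebasis (i : 'I_n) : vec := delta_mx ord0 i.

Definition nnz (x : vec) : nat := #|[set i : 'I_n | x ord0 i != 0]|.
Definition I1 (x : vec) : {set 'I_n} := [set i : 'I_n | x ord0 i != 0].
Definition I0 (x : vec) : {set 'I_n} := [set i : 'I_n | x ord0 i == 0].

Definition Ms (s : nat) (x : vec) : R :=
  nth 0 (sort (fun a b : R => b <= a) [seq `|x ord0 i| | i <- enum 'I_n]) s.-1.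

Definition enorm (d : vec) : R := Num.sqrt (\sum_(i < n) d ord0 i ^+ 2).

Definition partial (f : vec -> R) (i : 'I_n) (x : vec) : R := 'D_(ebasis i) f x.
Definition grad (f : vec -> R) (x : vec) : vec := \row_i partial f i x.

Definition C1 (f : vec -> R) : Prop :=
  (forall x, differentiable f x) /\ (forall i, continuous (partial f i)).

Definition bounded_below (f : vec -> R) : Prop := exists m : R, forall x, m <= f x.

Definition grad_lipschitz (f : vec -> R) : Prop :=
  exists L : R, forall x y, enorm (grad f x - grad f y) <= L * enorm (x - y).

Definition block_lip (f : vec -> R) (i j : 'I_n) (Lij : R) : Prop :=
  forall x d : vec, (nnz d <= 2)%N ->
    Num.sqrt ((partial f i x - partial f i (x + d)) ^+ 2
            + (partial f j x - partial f j (x + d)) ^+ 2) <= Lij * enorm d.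

Definition is_L2 (L : 'I_n -> 'I_n -> R) (L2 : R) : Prop :=
  (forall i j, i != j -> L i j <= L2) /\ (exists i j, i != j /\ L i j = L2).

Definition line_argmin (f : vec -> R) (x : vec) (i : 'I_n) (t : R) : Prop :=
  forall t', f (x + t *: ebasis i) <= f (x + t' *: ebasis i).

(* One step x -> x' of the partial sparse-simplex method (x' exists, i.e. no stop). *)
Definition pss_step (s : nat) (f : vec -> R) (x x' : vec) : Prop :=
  ((nnz x < s)%N /\
    exists (ik : 'I_n) (tk : R),
      line_argmin f x ik tk /\
      (forall (i : 'I_n) (t' : R), f (x + tk *: ebasis ik) <= f (x + t' *: ebasis i)) /\
      f (x + tk *: ebasis ik) < f x /\
      x' = x + tk *: ebasis ik)
  \/
  (nnz x = s /\
    exists (i1 i2 m : 'I_n) (T1 T2 : R),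
      i1 \in I1 x /\ line_argmin f x i1 T1 /\
      (forall i t', i \in I1 x -> f (x + T1 *: ebasis i1) <= f (x + t' *: ebasis i)) /\
      i2 \in I0 x /\ (forall i, i \in I0 x -> `|partial f i x| <= `|partial f i2 x|) /\
      m \in I1 x /\ (forall i, i \in I1 x -> `|x ord0 m| <= `|x ord0 i|) /\
      line_argmin f (x - x ord0 m *: ebasis m) i2 T2 /\
      let D1 := f (x + T1 *: ebasis i1) in
      let D2 := f (x - x ord0 m *: ebasis m + T2 *: ebasis i2) in
      x' = if D1 < D2 then x + T1 *: ebasis i1
           else x - x ord0 m *: ebasis m + T2 *: ebasis i2).

Definition Abound (s : nat) (f : vec -> R) (L2 : R) (x : vec) : R :=
  Num.max
    (1 / (2 * L2) * \big[Num.max/0]_(i in I1 x) (partial f i x) ^+ 2)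
    (Ms s x * (\big[Num.max/0]_(i in I0 x) `|partial f i x|
              - \big[Num.max/0]_(i in I1 x) `|partial f i x|
              - L2 * Ms s x)).

End PSS.

(* Main.v *)
Require Import Defs.
From HB Require Import structures.
From mathcomp Require Import all_boot all_order all_algebra.
From mathcomp Require Import all_classical all_reals all_analysis.
From mathcomp Require Import ring lra.
Import Order.TTheory GRing.Theory Num.Theory.
Import numFieldNormedType.Exports.
Local Open Scope classical_set_scope.
Local Open Scope ring_scope.

Section S.
Variables (R : realType) (n : nat).

Lemma v2E (i j k : 'I_n) (a b : R) :
  (a *: ebasis R i + b *: ebasis R j) ord0 k = a * (k == i)%:R + b * (k == j)%:R.
Proof. by rewrite !mxE /=. Qed.

Lemma enorm2 (i j : 'I_n) (a b : R) : i != j ->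
  enorm (a *: ebasis R i + b *: ebasis R j) = Num.sqrt (a ^+ 2 + b ^+ 2).
Proof.
move=> ij; rewrite /enorm; congr Num.sqrt.
rewrite (bigD1 i) //=. rewrite (bigD1 j) /=. 2: by apply: contra ij => /eqP ->.
rewrite big1; last first.
  by move=> k /andP[ki kj]; rewrite v2E (negbTE ki) (negbTE kj) !mulr_natr /= !mulr0n addr0 expr2 mulr0.
by rewrite !v2E !eqxx (negbTE ij) eq_sym (negbTE ij) !mulr_natr /= !(mulr1n, mulr0n, addr0, add0r).
Qed.

Lemma nnz2 (i j : 'I_n) (a b : R) : (nnz (a *: ebasis R i + b *: ebasis R j) <= 2)%N.
Proof.
rewrite /nnz; apply: leq_trans (_ : #|[set i; j]%SET| <= 2)%N; last first.
  by rewrite cards2; case: (i != j).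
apply: subset_leq_card; apply/fintype.subsetP => k; rewrite !inE v2E.
by case: (k == i); case: (k == j); rewrite //= !mulr_natr /= !mulr0n addr0 eqxx.
Qed.
Lemma phi_derive (f : 'rV[R]_n -> R) (df : forall x, differentiable f x) (x d : 'rV[R]_n) (t : R) :
  is_derive t 1 (fun u : R => f (x + u *: d)) ('D_d f (x + t *: d)).
Proof.
have E : (fun h : R => h^-1 *: (((fun u : R => f (x + u *: d)) \o shift t) (h *: 1) - f (x + t *: d)))
  = (fun h : R => h^-1 *: ((f \o shift (x + t *: d)) (h *: d) - f (x + t *: d))).
  apply/funext => h /=. congr (_ *: (f _ - _)).
  by rewrite [h *: 1]mulr1 scalerDl addrCA.
split.
  rewrite /derivable E; exact: diff_derivable.
by rewrite /derive E.
Qed.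
Lemma Dlin (f : 'rV[R]_n -> R) (df : forall x, differentiable f x) (y : 'rV[R]_n) (a b : R) (u v : 'rV[R]_n) :
  'D_(a *: u + b *: v) f y = a * 'D_u f y + b * 'D_v f y.
Proof.
rewrite !deriveE //. by rewrite linearD !linearZ.
Qed.

Lemma CS2 (a b u v : R) :
  a * u + b * v <= Num.sqrt (a ^+ 2 + b ^+ 2) * Num.sqrt (u ^+ 2 + v ^+ 2).
Proof.
rewrite -sqrtrM ?addr_ge0 ?sqr_ge0 //.
apply: le_trans (ler_norm _) _.
rewrite -sqrtr_sqr ler_sqrt ?mulr_ge0 ?addr_ge0 ?sqr_ge0 //.
have := sqr_ge0 (a * v - b * u); nra.
Qed.

Lemma descent (f : 'rV[R]_n -> R) (df : forall x, differentiable f x)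
  (i j : 'I_n) (Lij : R) : i != j -> block_lip f i j Lij ->
  forall x a b,
  f (x + (a *: ebasis R i + b *: ebasis R j)) <=
    f x + (a * partial f i x + b * partial f j x) + Lij / 2 * (a ^+ 2 + b ^+ 2).
Proof.
move=> ij bl x a b.
set d := a *: ebasis R i + b *: ebasis R j.
set c0 := a * partial f i x + b * partial f j x.
set K := Lij * (a ^+ 2 + b ^+ 2).
pose phi := fun u : R => f (x + u *: d).
pose g := phi - ((c0 \*: (id : R -> R)) + ((K / 2) \*: ((id : R -> R) * id))).
have Hg (u : R) : is_derive u 1 g ('D_d f (x + u *: d) - (c0 + K * u)).
  have := is_deriveB (phi_derive f df x d u)
    (is_deriveD (is_deriveZ c0 (is_derive_id u 1))
      (is_deriveZ (K/2) (is_deriveM (is_derive_id u 1) (is_derive_id u 1)))).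
  move=> H; apply: is_derive_eq H _.
  congr (_ - _); rewrite [c0%:A]mulr1 [u%:A]mulr1; change (c0 + (K / 2) * (u + u) = c0 + K * u); by field.
have cg : {within `[0, 1], continuous g}.
  apply: derivable_within_continuous => u _.
  by have [] := Hg u.
have [c c01 E] := MVT ltr01 (fun u _ => Hg u) cg.
have dle : 'D_d f (x + c *: d) - (c0 + K * c) <= 0.
  have c0' : 0 <= c by move: c01; rewrite in_itv => /andP[/ltW].
  rewrite subr_le0.
  have cd : c *: d = (c * a) *: ebasis R i + (c * b) *: ebasis R j.
    by rewrite /d scalerDr !scalerA.
  have B := bl x _ (nnz2 i j (c * a) (c * b)).
  rewrite enorm2 // -cd in B.
  have Sc : Num.sqrt ((c * a) ^+ 2 + (c * b) ^+ 2) = c * Num.sqrt (a ^+ 2 + b ^+ 2).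
    have -> : (c * a) ^+ 2 + (c * b) ^+ 2 = c ^+ 2 * (a ^+ 2 + b ^+ 2) by ring.
    by rewrite sqrtrM ?sqr_ge0 // sqrtr_sqr ger0_norm.
  rewrite Sc in B.
  set y := x + c *: d in B *.
  have CS := CS2 (- a) (- b) (partial f i x - partial f i y) (partial f j x - partial f j y).
  rewrite !sqrrN in CS.
  have H2 := ler_wpM2l (sqrtr_ge0 (a ^+ 2 + b ^+ 2)) B.
  have S2 := sqr_sqrtr (addr_ge0 (sqr_ge0 a) (sqr_ge0 b)).
  have H1 : - a * (partial f i x - partial f i y) + - b * (partial f j x - partial f j y)
     <= Lij * c * (a ^+ 2 + b ^+ 2).
    apply: le_trans CS (le_trans H2 _).
    move: S2; set q := Num.sqrt _ => S2; rewrite -S2 le_eqVlt; apply/orP; left; apply/eqP; ring.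
  rewrite /d Dlin //.
  change (a * partial f i y + b * partial f j y <= c0 + K * c).
  rewrite /c0 /K. nra.
have g1 : g 1 <= g 0.
  by rewrite -subr_le0 E subr0 mulr1.
move: g1.
change (f (x + 1 *: d) - (c0 * 1 + (K/2) * (1 * 1)) <= f (x + 0 *: d) - (c0 * 0 + (K/2)*(0*0)) -> f (x + d) <= f x + c0 + Lij / 2 * (a ^+ 2 + b ^+ 2)).
rewrite scale1r scale0r addr0 /K !mulr1 !mulr0 addr0 subr0 => H.
by move: H; rewrite mulrAC lerBlDr -[f x + c0 + _]addrA.
Qed.


Definition posR (a : R) : bool := 0 < a.

Lemma count_nnz (x : 'rV[R]_n) :
  count posR [seq `|x ord0 i| | i <- enum 'I_n] = nnz x.
Proof.
rewrite count_map /nnz cardE /enum_mem size_filter (@eq_filter _ _ predT) // filter_predT.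
by apply: eq_count => i /=; rewrite inE /posR normr_gt0.
Qed.

Lemma count_drop0 (S : seq R) k :
  (forall i, (k <= i)%N -> (i < size S)%N -> nth 0 S i <= 0) ->
  count posR (drop k S) = 0%N.
Proof.
move=> H; apply/eqP; rewrite eqn0Ngt -has_count; apply/negP => /(has_nthP 0) [i].
rewrite size_drop nth_drop => Hi; rewrite /posR ltNge H //; first exact: leq_addr.
by rewrite -ltn_subRL.
Qed.

Lemma count_take_all (S : seq R) k : (k <= size S)%N ->
  (forall i, (i < k)%N -> 0 < nth 0 S i) ->
  count posR (take k S) = k.
Proof.
move=> kS H.
have : all posR (take k S).
  apply/(all_nthP 0) => i; rewrite size_takel // => Hi; rewrite nth_take //; exact: H.
by rewrite all_count size_takel // => /eqP.
Qed.

Lemma Ms_eq s (x : 'rV[R]_n) m : (0 < s)%N -> (s <= n)%N -> nnz x = s ->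
  x ord0 m != 0 -> (forall i, x ord0 i != 0 -> `|x ord0 m| <= `|x ord0 i|) ->
  Ms s x = `|x ord0 m|.
Proof.
move=> s0 sn nz xm0 mmin.
rewrite /Ms.
set l := [seq `|x ord0 i| | i <- enum 'I_n].
set S := sort _ l.
have pS : perm_eq S l by rewrite /S perm_sort perm_refl.
have sz : size S = n by rewrite size_sort size_map size_enum_ord.
have tot : total (fun a b : R => b <= a) by move=> a b; rewrite le_total.
have srt : sorted (fun a b : R => b <= a) S := sort_sorted tot l.
have tr : transitive (fun a b : R => b <= a) by move=> b a c h1 h2; exact: le_trans h2 h1.
have rf : reflexive (fun a b : R => b <= a) by move=> a; exact: lexx.
have mono i j : (i <= j)%N -> (j < n)%N -> nth 0 S j <= nth 0 S i.
  move=> ij jn; apply: (sorted_leq_nth tr rf 0 srt); rewrite ?inE ?sz //.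
  exact: leq_ltn_trans ij jn.
have cnt : count posR S = s by rewrite (permP pS) count_nnz.
have s1n : (s.-1 < n)%N by rewrite prednK.
have apos : 0 < nth 0 S s.-1.
  rewrite ltNge; apply/negP => a0.
  have : (count posR S <= s.-1)%N.
    rewrite -(cat_take_drop s.-1 S) count_cat count_drop0 ?addn0.
      apply: leq_trans (count_size _ _) _; rewrite size_takel // sz ltnW //.
    by move=> i si iS; apply: le_trans a0; apply: mono; rewrite // -sz.
  by rewrite cnt; move: s0; case: (s) => // s' _; rewrite ltnn.
have ge : `|x ord0 m| <= nth 0 S s.-1.
  have : nth 0 S s.-1 \in S by apply: mem_nth; rewrite sz.
  rewrite (perm_mem pS) => /mapP [i _ Ei]; rewrite Ei in apos *.
  by apply: mmin; rewrite -normr_gt0.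
have qS : `|x ord0 m| \in S by rewrite (perm_mem pS); apply: map_f; rewrite mem_enum.
apply/eqP; rewrite eq_le ge andbT.
pose j := index `|x ord0 m| S.
have jn : (j < n)%N by rewrite -sz index_mem.
have Sj : nth 0 S j = `|x ord0 m| by rewrite nth_index.
case: (ltnP j s) => js.
  rewrite -Sj; apply: mono => //; by rewrite -ltnS prednK.
exfalso.
have ct : count posR (take s S) = s.
  apply: count_take_all; first by rewrite sz.
  move=> i ik; apply: lt_le_trans apos _; apply: mono => //; by rewrite -ltnS prednK.
have cd : count posR (drop s S) = 0%N.
  have E := cnt; rewrite -(cat_take_drop s S) count_cat ct in E.
  by move/eqP: E; rewrite -[X in _ == X]addn0 eqn_add2l => /eqP.
have : has posR (drop s S).
  apply/(has_nthP 0); exists (j - s)%N.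
    by rewrite size_drop sz ltn_subRL subnKC.
  by rewrite /posR nth_drop subnKC // Sj normr_gt0.
by rewrite has_count cd.
Qed.


Lemma L_nonneg (f : 'rV[R]_n -> R) (i j : 'I_n) Lij :
  i != j -> block_lip f i j Lij -> 0 <= Lij.
Proof.
move=> ij bl; have B := bl 0 _ (nnz2 i j 1 0).
rewrite enorm2 // expr1n expr0n /= addr0 sqrtr1 mulr1 in B.
exact: le_trans (sqrtr_ge0 _) B.
Qed.

Lemma bigmax_mul_le (I : finType) (P : pred I) (F : I -> R) (c D : R) :
  0 <= D -> (forall i, P i -> c * F i <= D) ->
  c * \big[Num.max/0]_(i | P i) F i <= D.
Proof.
move=> D0 H; apply: (big_ind (fun m => c * m <= D)) => //.
- by rewrite mulr0.
- by move=> a b Ha Hb; case: (leP a b).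
Qed.

Lemma bigmax_le0 (I : finType) (P : pred I) (F : I -> R) (D : R) :
  0 <= D -> (forall i, P i -> F i <= D) -> \big[Num.max/0]_(i | P i) F i <= D.
Proof.
move=> D0 H; apply: (big_ind (fun m => m <= D)) => //.
by move=> a b Ha Hb; case: (leP a b).
Qed.

Lemma le_bigmax0 (I : finType) (P : pred I) (F : I -> R) j :
  P j -> F j <= \big[Num.max/0]_(i | P i) F i.
Proof. by move=> Pj; rewrite (bigD1 j) //= le_max lexx. Qed.

End S.

Local Close Scope classical_set_scope.

Theorem lemma4p1 (R : realType) (n s : nat) (f : 'rV[R]_n -> R)
  (L : 'I_n -> 'I_n -> R) (L2 : R) (x : nat -> 'rV[R]_n) (K : nat) :
  C1 f -> bounded_below f -> grad_lipschitz f ->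
  (0 < s)%N -> (s < n)%N ->
  (forall i j : 'I_n, i != j -> block_lip f i j (L i j)) ->
  is_L2 L L2 ->
  (forall (y : 'rV[R]_n) (i : 'I_n), exists t, line_argmin f y i t) ->
  (nnz (x 0%N) <= s)%N ->
  (forall j, (j < K)%N -> pss_step s f (x j) (x j.+1)) ->
  forall k, (k < K)%N ->
    ((nnz (x k) < s)%N ->
       f (x k) - f (x k.+1) >=
         1 / (2 * L2) * \big[Num.max/0]_(i < n) (partial f i (x k)) ^+ 2) /\
    (nnz (x k) = s ->
       f (x k) - f (x k.+1) >= Abound s f L2 (x k)).
Proof.
move=> [df _] _ _ s0 sn bl [hL2 [i0 [j0 [ij0 Lij0]]]] _ _ steps k kK.
have L2ge0 : 0 <= L2 by rewrite -Lij0; exact: (@L_nonneg R n f _ _ _ ij0 (bl _ _ ij0)).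
have D1 : forall y (i : 'I_n) t,
    f (y + t *: ebasis R i) <= f y + t * partial f i y + L2 / 2 * t ^+ 2.
  move=> y i t.
  pose j := if i == i0 then j0 else i0.
  have ij : i != j.
    rewrite /j; by case: (eqVneq i i0) => [->|ne].
  have := @descent R n f df _ _ _ ij (bl _ _ ij) y t 0.
  rewrite scale0r addr0 mul0r addr0 expr0n /= addr0 => H.
  apply: le_trans H _; rewrite lerD2l ler_wpM2r ?sqr_ge0 // ler_pM2r ?invr_gt0 ?ltr0n //.
  exact: hL2.
have c0 : 0 <= 1 / (2 * L2) by rewrite mul1r invr_ge0 mulr_ge0.
have Hdec : forall y (i : 'I_n), exists t,
    f (y + t *: ebasis R i) <= f y - 1 / (2 * L2) * partial f i y ^+ 2.
  move=> y i; have [->|L2pos] := eqVneq L2 0.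
    by exists 0; rewrite mulr0 invr0 mulr0 mul0r subr0 scale0r addr0.
  exists (- partial f i y / L2); apply: le_trans (D1 y i _) _.
  rewrite le_eqVlt; apply/orP; left; apply/eqP; field; exact: L2pos.
have st := steps k kK.
split.
- move=> lt.
  case: st => [[_ [ik [tk [_ [Hmin [_ ->]]]]]] | [eq _]]; last by rewrite eq ltnn in lt.
  have per i : 1 / (2 * L2) * partial f i (x k) ^+ 2 <= f (x k) - f (x k + tk *: ebasis R ik).
    have [t Ht] := Hdec (x k) i.
    have := le_trans (Hmin i t) Ht.
    by rewrite lerBrDr addrC -lerBrDr.
  apply: bigmax_mul_le => //.
  apply: le_trans (per i0); exact: mulr_ge0 c0 (sqr_ge0 _).
- move=> eqs.
  case: st => [[lt _] | [_ [i1 [i2 [m [T1 [T2 [i1I [lm1 [Hmin1 [i2I [i2max [mI [mmin [lm2 Hx']]]]]]]]]]]]]]].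
    by rewrite eqs ltnn in lt.
  have Hx := Hx'; simpl in Hx.
  have [fD1 fD2] : f (x k.+1) <= f (x k + T1 *: ebasis R i1) /\
      f (x k.+1) <= f (x k - x k ord0 m *: ebasis R m + T2 *: ebasis R i2).
    rewrite Hx; case: ifP => h; split => //; first exact: ltW.
    by rewrite leNgt h.
  have per i : i \in I1 (x k) ->
      1 / (2 * L2) * partial f i (x k) ^+ 2 <= f (x k) - f (x k.+1).
    move=> iI; have [t Ht] := Hdec (x k) i.
    have := le_trans fD1 (le_trans (Hmin1 i t iI) Ht).
    by rewrite lerBrDr addrC -lerBrDr.
  have D0 : 0 <= f (x k) - f (x k.+1).
    apply: le_trans (per i1 i1I); exact: mulr_ge0 c0 (sqr_ge0 _).
  rewrite /Abound ge_max; apply/andP; split.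
    by apply: bigmax_mul_le.
  have xm0 : x k ord0 m != 0 by move: mI; rewrite inE.
  have xi20 : x k ord0 i2 == 0 by move: i2I; rewrite inE.
  have mi2 : m != i2 by apply/eqP => E; move: xm0; rewrite E xi20.
  rewrite (@Ms_eq R n s (x k) m s0 (ltnW sn) eqs xm0); last first.
    by move=> i xi; apply: mmin; rewrite inE.
  set q := `|x k ord0 m|.
  set gm := partial f m (x k).
  set g2 := partial f i2 (x k).
  have M0le : \big[Num.max/0]_(i in I0 (x k)) `|partial f i (x k)| <= `|g2|.
    by apply: bigmax_le0 => // i iI; apply: i2max.
  have M1ge : `|gm| <= \big[Num.max/0]_(i in I1 (x k)) `|partial f i (x k)|.
    exact: (@le_bigmax0 R _ (fun i => i \in I1 (x k)) (fun i => `|partial f i (x k)|) m mI).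
  have q0 : 0 <= q by apply: normr_ge0.
  apply: le_trans (_ : q * (`|g2| - `|gm| - L2 * q) <= _).
    by apply: ler_wpM2l => //; rewrite lerD2r lerB.
  pose b := if 0 <= g2 then - q else q.
  have bg : b * g2 = - (q * `|g2|).
    rewrite /b; case: ifP => h; first by rewrite ger0_norm // mulNr.
    by rewrite ltr0_norm ?mulrN ?opprK // ltNge h.
  have b2 : b ^+ 2 = q ^+ 2 by rewrite /b; case: ifP => _; rewrite ?sqrrN.
  have a2 : (- x k ord0 m) ^+ 2 = q ^+ 2 by rewrite sqrrN /q real_normK // num_real.
  have ag : - x k ord0 m * gm <= q * `|gm|.
    by apply: le_trans (ler_norm _) _; rewrite normrM normrN.
  have Dm := @descent R n f df m i2 (L m i2) mi2 (bl _ _ mi2) (x k) (- x k ord0 m) b.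
  have Lle : L m i2 / 2 * ((- x k ord0 m) ^+ 2 + b ^+ 2) <= L2 * (q * q).
    rewrite a2 b2 -expr2.
    have -> : L m i2 / 2 * (q ^+ 2 + q ^+ 2) = L m i2 * q ^+ 2 by field.
    by rewrite ler_wpM2r ?sqr_ge0 // hL2.
  have Hl := lm2 b.
  have E : x k - x k ord0 m *: ebasis R m + b *: ebasis R i2 =
           x k + (- x k ord0 m *: ebasis R m + b *: ebasis R i2).
    by rewrite scaleNr addrA.
  rewrite E in Hl.
  move: fD2 Hl Dm ag bg Lle.
  set F1 := f (x k.+1). set F2 := f (x k - _ + _). set F3 := f (x k + _).
  move=> h1 h2 h3 h4 h5 h6.
  set A := L m i2 / 2 * _ in h3 h6. set B := - x k ord0 m * gm in h3 h4. set C := b * g2 in h3 h5.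
  rewrite h5 in h3.
  have -> : q * (`|g2| - `|gm| - L2 * q) = q * `|g2| - q * `|gm| - L2 * (q * q) by ring.
  lra.
Qed.
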